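(* Let $n\ge 3$. There is no finite subset $Y\subseteq\mathbb{S}^{n-1}$ which is a spherical design of harmonic index $\{6,2\}$ and has \[|Y|=\frac{n(n+4)(2n+1)^2}{15(7n-4)},\] i.e. there exists no tight spherical design of harmonic index $\{6,2\}$ on $\mathbb{S}^{n-1}$ for $n\ge3$.
   Context: $\mathbb{S}^{n-1}$ is the unit sphere in $\mathbb{R}^n$. For $T\subseteq\mathbb{N}$, a finite $Y\subseteq\mathbb{S}^{n-1}$ is a spherical design of harmonic index $T$ if $\sum_{\mathbf{x}\in Y}f(\mathbf{x})=0$ for every real homogeneous harmonic polynomial $f$ in $n$ variables whose degree lies in $T$. With Gegenbauer polynomials $Q_{n,k}$ (orthogonal on $[-1,1]$ for the weight $(1-x^2)^{(n-3)/2}$, $Q_{n,k}(1)=\binom{n+k-1}{n-1}-\binom{n+k-3}{n-1}$; e.g. $Q_{n,2}(x)=\frac{(n+2)(nx^2-1)}{2}$), the polynomial $Q_{n,6}(x)+f_2Q_{n,2}(x)$ with $f_2=\frac{(n-2)(n+4)(n+10)}{32(n+8)}$ equals $ax^2(x^2-\alpha^2)^2-c_{n,T}$ with $a>0$, $\alpha^2=\frac{15}{2(n+8)}$, $c_{n,T}=\frac{(n+2)(n+6)(n+10)(7n-4)}{192(n+8)}$, giving the lower bound $|Y|\ge b_{n,T}=\frac{n(n+4)(2n+1)^2}{15(7n-4)}$ for designs of harmonic index $\{6,2\}$; a design attaining it is called tight. *)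

(* Defs.v *)
From HB Require Import structures.
From mathcomp Require Import all_boot all_order all_algebra.
From mathcomp Require Import reals.
From mathcomp Require Import mpoly.
Set Implicit Arguments. Unset Strict Implicit. Unset Printing Implicit Defensive.
Import Order.TTheory GRing.Theory Num.Theory.
Local Open Scope ring_scope.

Definition on_sphere (R : realType) (n : nat) (x : 'rV[R]_n) : Prop :=
  \sum_(i < n) x 0 i ^+ 2 = 1.

Definition mlaplacian (R : realType) (n : nat) (p : {mpoly R[n]}) : {mpoly R[n]} :=
  \sum_(i < n) mderiv i (mderiv i p).

Definition harmonic_homog (R : realType) (n k : nat) (f : {mpoly R[n]}) : Prop :=
  f \is k.-homog /\ mlaplacian f = 0.

Definition harmonic_index_design (R : realType) (n : nat) (T : nat -> Prop)
    (Y : seq 'rV[R]_n) : Prop :=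
  uniq Y /\ (forall x, x \in Y -> on_sphere x) /\
  forall (k : nat) (f : {mpoly R[n]}), T k -> harmonic_homog k f ->
    \sum_(x <- Y) f.@[fun i => x 0 i] = 0.

(* Main.v *)
Require Import Defs.
From HB Require Import structures.
From mathcomp Require Import all_boot all_order all_algebra.
From mathcomp Require Import reals.
From mathcomp Require Import mpoly.
Import Order.TTheory GRing.Theory Num.Theory.
Local Open Scope ring_scope.
From mathcomp Require Import ring lra zify ssrZ.
From Stdlib Require ZArith Lia List.

Module NT.
Import ZArith Lia.
Local Open Scope Z_scope.
Definition chk (n:Z) : bool := orb (negb (Z.eqb (Z.modulo (n*(n+4)*((2*n+1)*(2*n+1))) (15*(7*n-4))) 0)) (orb (n =? 12) (n=?92)).
Lemma all_chk: List.forallb chk (List.map Z.of_nat (List.seq 3 4112)) = true.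
Proof. vm_compute. reflexivity. Qed.
Lemma ntZ (n m k : Z) : 3 <= n -> 15*(7*n-4)* m = n*(n+4)*((2*n+1)*(2*n+1)) ->
  15 * (n*n) * (k*k) = 2*(n+8)*((m-2*n)*(m-2*n)) -> False.
Proof.
intros Hn Hm Hk.
assert (Hq : (7*n-4)*(2401*15* m - (1372*n^3 + 7644*n^2 + 10199*n + 7200)) = 28800).
{ transitivity (2401*(15*(7*n-4)* m) - (7*n-4)*(1372*n^3 + 7644*n^2 + 10199*n + 7200)). ring. rewrite Hm. ring. }
assert (Hb : n <= 4114).
{ set (q := 2401*15* m - _) in Hq. clearbody q. clear Hm Hk. assert (1 <= q) by nia. nia. }
assert (Hc : chk n = true).
{ pose proof all_chk as A. rewrite List.forallb_forall in A. apply A.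
  replace n with (Z.of_nat (Z.to_nat n)) by lia. apply List.in_map. apply List.in_seq. lia. }
unfold chk in Hc.
assert (Hmod : (n*(n+4)*((2*n+1)*(2*n+1))) mod (15*(7*n-4)) = 0).
{ rewrite <- Hm. rewrite (Z.mul_comm _ m). apply Z.mod_mul. lia. }
rewrite Hmod in Hc. simpl in Hc.
apply Bool.orb_true_iff in Hc; destruct Hc as [H|H]; apply Z.eqb_eq in H; subst n.
- assert (m = 100) by lia. subst m. remember (k*k) as K. lia.
- assert (m = 31487) by lia. subst m. remember (k*k) as K. lia.
Qed.

Local Open Scope ring_scope.
Lemma nt_ssr (n m : nat) (k : int) : (3 <= n)%nat ->
  (m * (15 * (7 * n - 4)) = n * (n + 4) * ((2 * n + 1) * (2 * n + 1)))%nat ->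
  15 * (n%:Z * n%:Z) * (k * k) = 2 * (n%:Z + 8) * ((m%:Z - 2 * n%:Z) * (m%:Z - 2 * n%:Z)) -> False.
Proof.
move=> h1 h2 h3; apply: (ntZ (Z.of_nat n) (Z.of_nat m) (Z_of_int k)); zify; lia.
Qed.
End NT.


Section Poly.
Variables (R : realType) (n : nat).
Notation P := {mpoly R[n]}.

Lemma dXi (i j : 'I_n) : mderiv i ('X_j : P) = (i == j)%:R.
Proof.
rewrite mderivX mnm1E; case: (eqVneq j i) => [->|ne].
  have -> : (U_(i) - U_(i) = 0)%MM by apply/mnmP => k; rewrite mnmBE subnn mnm0E.
  by rewrite mpolyX0 /= scale1r.
by rewrite /= scale0r.
Qed.

Definition uu (y : 'I_n -> R) : P := \sum_(i < n) y i *: 'X_i.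
Definition rr : P := \sum_(i < n) 'X_i ^+ 2.

Lemma duu y i : mderiv i (uu y) = (y i)%:MP.
Proof.
rewrite /uu raddf_sum (bigD1 i) //= big1 => [|j nji]; rewrite linearZ /= dXi.
  by rewrite eqxx addr0 -alg_mpolyC.
by rewrite eq_sym (negbTE nji) scaler0.
Qed.

Lemma dpow i (p : P) k : mderiv i (p ^+ k.+1) = p ^+ k * mderiv i p *+ k.+1.
Proof.
elim: k => [|k IH]; first by rewrite expr1 expr0 mul1r.
rewrite exprS mderivM IH !exprS. set a := p ^+ k. set d := mderiv i p. ring. Qed.


Definition lap (p : P) : P := mlaplacian p.
Definition gd (p q : P) : P := \sum_(i < n) mderiv i p * mderiv i q.

Lemma lapD p q : lap (p + q) = lap p + lap q.
Proof. by rewrite /lap /mlaplacian -big_split; apply: eq_bigr => i _; rewrite !raddfD. Qed.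
Lemma lapN p : lap (- p) = - lap p.
Proof. by rewrite /lap /mlaplacian -sumrN; apply: eq_bigr => i _; rewrite !raddfN. Qed.
Lemma lapB p q : lap (p - q) = lap p - lap q.
Proof. by rewrite lapD lapN. Qed.
Lemma lapMn p k : lap (p *+ k) = lap p *+ k.
Proof. by rewrite /lap /mlaplacian -sumrMnl; apply: eq_bigr => i _; rewrite !raddfMn. Qed.

Lemma lapM p q : lap (p * q) = lap p * q + gd p q *+ 2 + p * lap q.
Proof.
rewrite /lap /mlaplacian /gd mulr_suml mulr_sumr -sumrMnl -!big_split.
apply: eq_bigr => i _ /=; rewrite !mderivM mderivD !mderivM; ring.
Qed.

Lemma sum_cX y : (\sum_(i < n) (y i)%:MP * 'X_i : P) = uu y.
Proof. by apply: eq_bigr => i _; rewrite mul_mpolyC. Qed.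

Lemma sum_XX : \sum_(i < n) ('X_i * 'X_i : P) = rr.
Proof. by apply: eq_bigr => i _; rewrite expr2. Qed.

Lemma sum_cc y z : \sum_(i < n) (y i)%:MP * (z i)%:MP = (\sum_(i < n) y i * z i)%:MP :> P.
Proof. by rewrite [RHS]raddf_sum; apply: eq_bigr => i _ /=; rewrite mpolyCM. Qed.

Lemma drr i : mderiv i rr = 'X_i *+ 2.
Proof.
rewrite /rr raddf_sum (bigD1 i) //= big1 => [|j nji]; rewrite dpow expr1 dXi.
  by rewrite eqxx mulr1 addr0.
by rewrite eq_sym (negbTE nji) mulr0 mul0rn.
Qed.

Lemma lap_r : lap rr = (2 * n)%:R.
Proof.
rewrite /lap /mlaplacian (eq_bigr (fun _ => 2%:R)) ?sumr_const ?card_ord.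
  by rewrite natrM mulr_natr.
by move=> i _; rewrite drr raddfMn /= dXi eqxx.
Qed.

Lemma lap_u y : lap (uu y) = 0.
Proof. by rewrite /lap /mlaplacian big1 // => i _; rewrite duu mderivC. Qed.

Lemma gd_uu y z : gd (uu y) (uu z) = (\sum_(i < n) y i * z i)%:MP.
Proof. by rewrite /gd -sum_cc; apply: eq_bigr => i _; rewrite !duu. Qed.

Lemma d_upow y a i : mderiv i (uu y ^+ a.+1) = uu y ^+ a * (y i)%:MP *+ a.+1.
Proof. by rewrite dpow duu. Qed.

Lemma d_rpow a i : mderiv i (rr ^+ a.+1) = rr ^+ a * 'X_i *+ (2 * a.+1).
Proof. by rewrite dpow drr mulrnAr -mulrnA mulnC. Qed.

Lemma lap_upow y a : lap (uu y ^+ a.+2) =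
   uu y ^+ a * (\sum_(i < n) y i * y i)%:MP *+ (a.+2 * a.+1).
Proof.
rewrite /lap /mlaplacian -sum_cc mulr_sumr -sumrMnl; apply: eq_bigr => i _.
rewrite d_upow raddfMn /= mderivM d_upow mderivC; ring.
Qed.

Lemma gd_ur y a b : gd (uu y ^+ a.+1) (rr ^+ b.+1) =
   uu y ^+ a.+1 * rr ^+ b *+ (2 * a.+1 * b.+1).
Proof.
rewrite /gd.
rewrite (eq_bigr (fun i => (uu y ^+ a * rr ^+ b) * ((y i)%:MP * 'X_i) *+ (2 * a.+1 * b.+1))).
  by rewrite sumrMnl -mulr_sumr sum_cX exprS; congr (_ *+ _); ring.
move=> i _; rewrite d_upow d_rpow; ring.
Qed.

Lemma lap_rpow c : lap (rr ^+ c.+2) = rr ^+ c.+1 *+ (4 * c.+1 * c.+2 + 2 * n * c.+2).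
Proof.
rewrite /lap /mlaplacian.
rewrite (eq_bigr (fun i => rr ^+ c * ('X_i * 'X_i) *+ (4 * c.+1 * c.+2) + rr ^+ c.+1 *+ (2 * c.+2))).
  rewrite big_split /= sumrMnl -mulr_sumr sum_XX sumr_const card_ord exprS; ring.
move=> i _; rewrite d_rpow raddfMn /= mderivM d_rpow dXi eqxx mulr1.
ring.
Qed.


Lemma lapZ c p : lap (c *: p) = c *: lap p.
Proof. by rewrite /lap /mlaplacian scaler_sumr; apply: eq_bigr => i _; rewrite !linearZ. Qed.

Definition H6 y : P :=
  uu y ^+ 6 *+ ((n+8)*(n+6)*(n+4)) - uu y ^+ 4 * rr *+ (15*(n+6)*(n+4))
  + uu y ^+ 2 * rr ^+ 2 *+ (45*(n+4)) - rr ^+ 3 *+ 15.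

Definition H2 y z : P := uu y * uu z *+ n - (\sum_(i < n) y i * z i) *: rr.

Lemma lap_H6 y : \sum_(i < n) y i * y i = 1 -> lap (H6 y) = 0.
Proof.
move=> hy; rewrite /H6 !(lapD, lapB, lapN, lapMn).
rewrite (lapM (uu y ^+ 4)) (lapM (uu y ^+ 2)).
rewrite (lap_upow _ 4) (lap_upow _ 2) (lap_upow _ 0).
rewrite -[rr in gd _ rr]expr1 (gd_ur _ 3 0) (gd_ur _ 1 1) (lap_rpow 0) (lap_rpow 1) expr1 lap_r.
rewrite hy mpolyC1 expr0. ring.
Qed.

Lemma lap_H2 y z : lap (H2 y z) = 0.
Proof.
rewrite /H2 lapB lapMn lapZ lapM !lap_u gd_uu lap_r -mul_mpolyC; ring.
Qed.

Lemma homX i : ('X_i : P) \is 1.-homog.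
Proof. by rewrite dhomogX; apply/eqP; apply: mdeg1. Qed.

Lemma homMn d (p : P) k : p \is d.-homog -> p *+ k \is d.-homog.
Proof. by move=> h; rewrite -scaler_nat; apply: dhomogZ. Qed.

Lemma homB d (p q : P) : p \is d.-homog -> q \is d.-homog -> p - q \is d.-homog.
Proof. by move=> hp hq; apply: dhomogD => //; rewrite dhomogN. Qed.

Lemma hom_u y : uu y \is 1.-homog.
Proof.
rewrite /uu; apply: (big_ind (fun p : P => p \is 1.-homog)).
- exact: dhomog0.
- by move=> p q hp hq; apply: dhomogD.
- by move=> i _; apply: dhomogZ; apply: homX.
Qed.

Lemma hom_r : rr \is 2.-homog.
Proof.
rewrite /rr; apply: (big_ind (fun p : P => p \is 2.-homog)).
- exact: dhomog0.
- by move=> p q hp hq; apply: dhomogD.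
- by move=> i _; apply: (dhomogMn 2 (homX i)).
Qed.

Lemma hom_H6 y : H6 y \is 6.-homog.
Proof.
have hu := hom_u y; have hr := hom_r.
rewrite /H6; apply: homB; [apply: dhomogD; [apply: homB|]|]; apply: homMn.
- exact: (dhomogMn 6 hu).
- exact: (dhomogM (dhomogMn 4 hu) hr).
- exact: (dhomogM (dhomogMn 2 hu) (dhomogMn 2 hr)).
- exact: (dhomogMn 3 hr).
Qed.

Lemma hom_H2 y z : H2 y z \is 2.-homog.
Proof.
rewrite /H2; apply: homB; first by apply: homMn; exact: (dhomogM (hom_u y) (hom_u z)).
by apply: dhomogZ; apply: hom_r.
Qed.

Lemma ev_u v y : (uu y).@[v] = \sum_(i < n) y i * v i.
Proof. by rewrite /uu raddf_sum; apply: eq_bigr => i _; rewrite /= mevalZ mevalXU. Qed.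

Lemma ev_r v : rr.@[v] = \sum_(i < n) v i ^+ 2.
Proof. by rewrite /rr raddf_sum; apply: eq_bigr => i _; rewrite /= rmorphXn /= mevalXU. Qed.

End Poly.
Arguments uu {R n}. Arguments rr {R n}. Arguments H6 {R n}. Arguments H2 {R n}.
Arguments hom_H6 {R n}. Arguments hom_H2 {R n}. Arguments lap_H6 {R n}. Arguments lap_H2 {R n}.
Arguments ev_u {R n}. Arguments ev_r {R n}.


Section Core.
Variables (R : realType) (n : nat) (T : eqType) (Y : seq T) (ip : T -> T -> R).
Let N : R := n%:R.
Definition h6 (t : R) : R := t ^+ 6 *+ ((n+8)*(n+6)*(n+4)) - t ^+ 4 *+ (15*(n+6)*(n+4))
  + t ^+ 2 *+ (45*(n+4)) - 1 *+ 15.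
Definition KK (t : R) : R := t ^+ 2 * (2 * (N + 8) * t ^+ 2 - 15) ^+ 2.

Lemma KK_id t : N * (N + 6) * (N + 4) * KK t =
  4 * N * (N + 8) * h6 t + 45 * (N + 4) * (N - 2) * (N * (t * t) - 1)
  + 15 * (7 * N - 4) * (N + 6).
Proof. rewrite /KK /h6 /N. ring. Qed.

Lemma KK_ge0 t : 0 <= KK t.
Proof. by rewrite /KK mulr_ge0 // sqr_ge0. Qed.

Lemma KK1 : KK 1 = (2 * N + 1) ^+ 2.
Proof. rewrite /KK; ring. Qed.

Lemma KK0 t : KK t = 0 -> t = 0 \/ 2 * (N + 8) * (t * t) = 15.
Proof.
rewrite /KK => /eqP; rewrite mulf_eq0 !expf_eq0 /= => /orP[/eqP -> |/eqP h]; first by left.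
by right; rewrite -expr2; apply/eqP; rewrite -subr_eq0 h.
Qed.

Lemma sum_one (s : seq T) : \sum_(x <- s) (1 : R) = (size s)%:R.
Proof. by elim: s => [|a s IH]; rewrite ?big_nil // big_cons IH -natr1 addrC. Qed.

Lemma int_sum (s : seq T) (P : pred T) (f : T -> R) :
  (forall x, x \in s -> P x -> f x * (f x - 1) * (f x + 1) = 0) ->
  exists k : int, \sum_(x <- s | P x) f x = k%:~R.
Proof.
elim: s => [|a s IH] h; first by exists 0; rewrite big_nil.
have [k hk] : exists k : int, \sum_(x <- s | P x) f x = k%:~R.
  by apply: IH => x hx; apply: h; rewrite in_cons hx orbT.
rewrite big_cons; case: ifP => Pa; last by exists k.
have := h a (mem_head _ _) Pa; move/eqP; rewrite !mulf_eq0 subr_eq0 addr_eq0.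
case/orP => [/orP[/eqP e|/eqP e]|/eqP e].
- by exists k; rewrite e add0r.
- by exists (k + 1); rewrite e hk intrD addrC.
- by exists (k - 1); rewrite e hk intrB addrC.
Qed.


Lemma sum_const (s : seq T) (c : R) : \sum_(x <- s) c = c * (size s)%:R.
Proof. by rewrite -sum_one mulr_sumr; apply: eq_bigr => x _; rewrite mulr1. Qed.

Lemma core : (3 <= n)%N -> uniq Y -> (forall x, x \in Y -> ip x x = 1) ->
 (forall x y, ip x y = ip y x) ->
 (forall y, y \in Y -> \sum_(x <- Y) h6 (ip x y) = 0) ->
 (forall y z, y \in Y -> z \in Y -> \sum_(x <- Y) (N * (ip x y * ip x z) - ip y z) = 0) ->
 (size Y * (15 * (7 * n - 4)) = n * (n + 4) * ((2 * n + 1) * (2 * n + 1)))%N ->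
 exists k : int, 15 * (n%:Z * n%:Z) * (k * k) =
   2 * (n%:Z + 8) * (((size Y)%:Z - 2 * n%:Z) * ((size Y)%:Z - 2 * n%:Z)).
Proof.
move=> hn uY h1 hsym h6s h2s hm.
set m := size Y in hm *.
have hN3 : 3 <= N by rewrite /N ler_nat.
have hmR : m%:R * (15 * (7 * N - 4)) = N * (N + 4) * ((2 * N + 1) * (2 * N + 1)).
  have := congr1 (fun k : nat => k%:R : R) hm; rewrite /= !natrM !natrD natrB; last by lia.
  by rewrite /N natrM => ->; ring.
have hK : forall y, y \in Y -> forall x, x \in Y -> x != y -> KK (ip x y) = 0.
  move=> y hy.
  have e2 := h2s y y hy hy; rewrite h1 // in e2.
  have sK : \sum_(x <- Y) KK (ip x y) = (2 * N + 1) ^+ 2.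
    have c0 : N * (N + 6) * (N + 4) != 0.
      by rewrite !mulf_neq0 // lt0r_neq0 //; lra.
    apply: (mulfI c0); rewrite mulr_sumr (eq_bigr _ (fun x _ => KK_id (ip x y))).
    rewrite !big_split /= -!mulr_sumr (h6s y hy) e2 sum_const.
    transitivity ((N + 6) * (m%:R * (15 * (7 * N - 4)))); first by ring.
    rewrite hmR; ring.
  rewrite (bigD1_seq y) //= h1 // KK1 in sK.
  have : \sum_(x <- Y | x != y) KK (ip x y) == 0.
    by apply/eqP; apply: (addrI ((2 * N + 1) ^+ 2)); rewrite addr0.
  rewrite psumr_eq0; last by move=> x _; apply: KK_ge0.
  move=> /allP hall x hx hxy; have := hall x hx; rewrite hxy /= => /eqP //.
have hpos : (0 < m)%N.
  rewrite lt0n; apply/eqP => m0; move: hm; rewrite m0 mul0n => /esym/eqP.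
  by rewrite !muln_eq0; lia.
have [y hy] : exists y, y \in Y.
  by move: hpos; rewrite /m; case: (Y) => [|a r] //= _; exists a; exact: mem_head.
have [z [hz [hzy hsz]]] : exists z, [/\ z \in Y, z != y & ip z y != 0].
  case: (boolP (has (fun z => (z != y) && (ip z y != 0)) Y)).
    by move=> /hasP [z hz /andP [a b]]; exists z.
  move=> /hasPn h0; exfalso.
  have e2 := h2s y y hy hy; rewrite h1 // sumrB -mulr_sumr sum_const mul1r in e2.
  rewrite (bigD1_seq y) //= h1 // mulr1 big1_seq ?addr0 in e2; last first.
    move=> x /andP [hxy hx]; have := h0 x hx; rewrite hxy /= negbK => /eqP ->.
    by rewrite mul0r.
  have eN : N = m%:R by move: e2; rewrite mulr1 /m => /eqP; rewrite subr_eq0 => /eqP.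
  rewrite -eN in hmR; clear -hmR hN3; nra.
set s := ip z y.
have hs : 2 * (N + 8) * (s * s) = 15.
  by case: (KK0 _ (hK y hy z hz hzy)) => // h; rewrite h eqxx in hsz.
have wne : 2 * (N + 8) != 0 by rewrite mulf_neq0 // lt0r_neq0 //; lra.
have hN8 : n%:R + 8 != 0 :> R by rewrite lt0r_neq0 //; rewrite -/N; lra.
pose f x := 2 * (N + 8) * (ip x y * ip x z) / 15.
have [k hk] : exists k : int,
    \sum_(x <- [seq x <- Y | x != y] | x != z) f x = k%:~R.
  apply: int_sum => x; rewrite mem_filter => /andP [hxy hx] hxz.
  have ht := KK0 _ (hK y hy x hx hxy); have hu := KK0 _ (hK z hz x hx hxz).
  case: ht => [ht|ht]; first by rewrite /f ht; ring.
  case: hu => [hu|hu]; first by rewrite /f hu; ring.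
  have ff : f x * f x = 1.
    transitivity ((2 * (N + 8) * (ip x y * ip x y)) * (2 * (N + 8) * (ip x z * ip x z)) / (15 * 15)).
      by rewrite /f; field.
    by rewrite ht hu; field.
  transitivity (f x * (f x * f x - 1)); first by ring.
  by rewrite ff subrr mulr0.
exists k.
have e := h2s y z hy hz; rewrite sumrB -mulr_sumr sum_const in e.
rewrite (bigD1_seq y) //= h1 // -big_filter (bigD1_seq z) ?mem_filter ?hzy ?filter_uniq //= in e.
rewrite (hsym y z) -/s h1 // in e.
have hr : \sum_(x <- [seq x <- Y | x != y] | x != z) (ip x y * ip x z) =
    15 / (2 * (N + 8)) * k%:~R.
  rewrite -hk mulr_sumr; apply: eq_bigr => x _; rewrite /f; field; exact: hN8.
rewrite hr in e.
set K := (k%:~R : R) in e.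
have e1 : 15 * N * K = 2 * (N + 8) * s * (m%:R - 2 * N).
  have : 2 * (N + 8) * (N * (1 * s + (s * 1 + 15 / (2 * (N + 8)) * K)) - s * m%:R) = 0.
    by rewrite e mulr0.
  move=> h; apply/eqP; rewrite -subr_eq0 -h; apply/eqP; field; exact: hN8.
have e3 : (15 * N * K) * (15 * N * K) = 15 * (2 * (N + 8)) * ((m%:R - 2 * N) * (m%:R - 2 * N)).
  rewrite e1; transitivity ((2 * (N + 8) * (s * s)) * (2 * (N + 8)) * ((m%:R - 2 * N) * (m%:R - 2 * N))); first by ring.
  by rewrite hs.
have e4 : 15 * (N * N) * (K * K) = 2 * (N + 8) * ((m%:R - 2 * N) * (m%:R - 2 * N)).
  apply: (mulfI (_ : (15 : R) != 0)); first by rewrite pnatr_eq0.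
  transitivity ((15 * N * K) * (15 * N * K)); first by ring.
  rewrite e3; ring.
apply/eqP; rewrite -(eqr_int R) !(intrM, intrD, intrB) -!pmulrn; apply/eqP.
rewrite -/N -/K.
transitivity (15 * (N * N) * (K * K)); first by ring.
rewrite e4 /m; ring.
Qed.
End Core.
Arguments h6 {R}.

Theorem mainTheorem8 (R : realType) (n : nat) : (3 <= n)%N ->
  ~ exists Y : seq 'rV[R]_n,
      harmonic_index_design (fun k => k = 6%N \/ k = 2%N) Y /\
      (size Y)%:R = (n * (n + 4) * (2 * n + 1) ^ 2)%:R / (15 * (7 * n - 4))%:R :> R.
Proof.
move=> hn [Y [[uY [hsph hdes]] hsize]].
pose ip (x y : 'rV[R]_n) := \sum_(i < n) y 0 i * x 0 i.
have hm : (size Y * (15 * (7 * n - 4)) = n * (n + 4) * ((2 * n + 1) * (2 * n + 1)))%N.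
  have hB : (15 * (7 * n - 4))%:R != 0 :> R by rewrite pnatr_eq0; lia.
  have := congr1 (fun r => r * (15 * (7 * n - 4))%:R) hsize; rewrite /= mulfVK // -natrM.
  by move/eqP; rewrite eqr_nat => /eqP ->; rewrite mulnn.
have h1 : forall x, x \in Y -> ip x x = 1.
  by move=> x /hsph; rewrite /on_sphere => <-; apply: eq_bigr => i _; rewrite expr2.
have hsym : forall x y, ip x y = ip y x.
  by move=> x y; apply: eq_bigr => i _; rewrite mulrC.
have hev_u : forall x y : 'rV[R]_n, (uu (fun i => y 0 i)).@[fun i => x 0 i] = ip x y.
  by move=> x y; rewrite ev_u.
have hev_r : forall x : 'rV[R]_n, x \in Y -> (rr : {mpoly R[n]}).@[fun i => x 0 i] = 1.
  by move=> x /hsph; rewrite ev_r.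
have h6s : forall y, y \in Y -> \sum_(x <- Y) h6 n (ip x y) = 0.
  move=> y hy.
  have := hdes 6%N (H6 (fun i => y 0 i)) (or_introl erefl)
    (conj (hom_H6 _) (lap_H6 _ (h1 y hy))).
  move=> e; apply: (etrans _ e); apply: eq_big_seq => x hx.
  rewrite /H6 !(rmorphD, rmorphB, rmorphN, rmorphMn, rmorphM, rmorphXn) /= hev_u hev_r // /h6.
  ring.
have h2s : forall y z, y \in Y -> z \in Y ->
    \sum_(x <- Y) (n%:R * (ip x y * ip x z) - ip y z) = 0.
  move=> y z hy hz.
  have := hdes 2%N (H2 (fun i => y 0 i) (fun i => z 0 i)) (or_intror erefl)
    (conj (hom_H2 _ _) (lap_H2 _ _)).
  move=> e; apply: (etrans _ e); apply: eq_big_seq => x hx.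
  rewrite /H2 !(rmorphD, rmorphB, rmorphN, rmorphMn, rmorphM) /= mevalZ hev_u hev_u hev_r // (hsym y z).
  rewrite mulr1 /ip; ring.
have [k hk] := @core R n _ Y ip hn uY h1 hsym h6s h2s hm.
exact: (NT.nt_ssr _ _ _ hn hm hk).
Qed.
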